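(* Let $s\ge 2$ and $1\le t\le s-1$ be integers and let $a_1,\dots,a_t$ be positive integers. Then, as $z\to\infty$ (with implied constants depending only on $s,t,a_1,\dots,a_t$): (i) $$\sum_{\substack{x_1,\dots,x_t\ge 1\\ a_1x_1+\cdots+a_tx_t=z}}(x_1\cdots x_t)^{-1+1/s}\ll z^{-1+t/s};$$ (ii) $$\sum_{\substack{x_1,\dots,x_t\ge 1\\ a_1x_1+\cdots+a_tx_t<z}}(x_1\cdots x_t)^{-1+1/s}\big(z-(a_1x_1+\cdots+a_tx_t)\big)^{-2t/s}\ll z^{-1/s}\log z.$$
   Context: The variables $x_1,\dots,x_t$ range over positive integers. *)

(* Defs.v *)
From HB Require Import structures.
From mathcomp Require Import all_boot all_order all_algebra.
From mathcomp Require Import all_classical all_reals all_analysis.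
Set Implicit Arguments. Unset Strict Implicit. Unset Printing Implicit Defensive.
Import Order.TTheory GRing.Theory Num.Theory.
Local Open Scope ring_scope.

Definition wsum (t z : nat) (a : 'I_t -> nat) (x : {ffun 'I_t -> 'I_z.+1}) : nat :=
  (\sum_(i < t) a i * x i)%N.

(* Sum (i): over x_1..x_t >= 1 with a.x = z.  Since a_i >= 1 every x_i <= z,
   so ranging x_i over {0..z} loses no term. *)
Definition S1 (R : realType) (s t : nat) (a : 'I_t -> nat) (z : nat) : R :=
  \sum_(x : {ffun 'I_t -> 'I_z.+1} | [forall i, (0 < x i)%N] && (wsum a x == z))
     (\prod_(i < t) ((x i : nat)%:R : R)) `^ (-1 + s%:R^-1).

Definition S2 (R : realType) (s t : nat) (a : 'I_t -> nat) (z : nat) : R :=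
  \sum_(x : {ffun 'I_t -> 'I_z.+1} | [forall i, (0 < x i)%N] && (wsum a x < z)%N)
     ((\prod_(i < t) ((x i : nat)%:R : R)) `^ (-1 + s%:R^-1)
      * (z%:R - (wsum a x)%:R : R) `^ (- (2 * t%:R / s%:R))).

(* Main.v *)
Require Import Defs.
From HB Require Import structures.
From mathcomp Require Import all_boot all_order all_algebra.
From mathcomp Require Import all_classical all_reals all_analysis.
From mathcomp Require Import ring lra zify.
Import Order.TTheory GRing.Theory Num.Theory.
Local Open Scope ring_scope.

Lemma eqle (R : realType) (x y : R) : x = y -> x <= y.
Proof. by move=> ->. Qed.

Lemma powR_decr (R : realType) (x y r : R) :
  0 < x -> x <= y -> r <= 0 -> y `^ r <= x `^ r.
Proof.
move=> x0 xy r0.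
have y0 : 0 < y by apply: lt_le_trans xy.
have -> : r = - (- r) by rewrite opprK.
rewrite !(powRN _ (- r)).
rewrite lef_pV2 ?posrE ?invr_gt0 ?powR_gt0 //.
by apply: (ge0_ler_powR _ _ _ xy); rewrite ?nnegrE ?oppr_ge0 // ltW.
Qed.

Lemma subXX_le (R : realType) (u v : R) n : 0 <= v -> v <= u ->
  u ^+ n.+1 - v ^+ n.+1 <= n.+1%:R * (u - v) * u ^+ n.
Proof.
move=> v0 vu; have u0 : 0 <= u by apply: le_trans vu.
elim: n => [|n IH]; first by rewrite !expr1 expr0 mulr1 mul1r.
have h1 : u * (u ^+ n.+1 - v ^+ n.+1) <= u * (n.+1%:R * (u - v) * u ^+ n).
  by rewrite ler_wpM2l.
have h2 : v ^+ n.+1 * (u - v) <= u ^+ n.+1 * (u - v).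
  by rewrite ler_wpM2r ?subr_ge0 // lerXn2r.
have -> : u ^+ n.+2 - v ^+ n.+2 = u * (u ^+ n.+1 - v ^+ n.+1) + v ^+ n.+1 * (u - v).
  by rewrite !exprS; ring.
apply: le_trans (lerD h1 h2) _.
rewrite [u ^+ n.+1]exprS -[n.+2%:R]natr1; apply: eqle; ring.
Qed.

Lemma powR_ns (R : realType) (s : nat) (x : R) : (0 < s)%N -> 0 <= x ->
  (x `^ s%:R^-1) ^+ s = x.
Proof.
move=> s0 x0; rewrite -powR_mulrn ?powR_ge0 // -powRrM mulVf ?powRr1 //.
by rewrite pnatr_eq0 -lt0n.
Qed.

Lemma step_f (R : realType) (s n : nat) : (0 < s)%N ->
  (n.+1%:R : R) `^ (-1 + s%:R^-1) <=
  s%:R * ((n.+1%:R : R) `^ s%:R^-1 - (n%:R : R) `^ s%:R^-1).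
Proof.
move=> s0.
set u := (n.+1%:R : R) `^ s%:R^-1; set v := (n%:R : R) `^ s%:R^-1.
have u0 : 0 < u by rewrite powR_gt0 // ltr0n.
have v0 : 0 <= v by rewrite powR_ge0.
have vu : v <= u by apply: (ge0_ler_powR _ _ _ (_ : (n%:R:R) <= n.+1%:R)); rewrite ?nnegrE ?invr_ge0 ?ler0n ?ler_nat.
have us : u ^+ s = n.+1%:R by rewrite powR_ns // ler0n.
have vs : v ^+ s = n%:R by rewrite powR_ns // ler0n.
case: s s0 @u @v u0 v0 vu us vs => // m _ u v u0 v0 vu us vs.
have -> : (n.+1%:R : R) `^ (-1 + m.+1%:R^-1) = (u ^+ m)^-1.
  rewrite powRD; last by rewrite pnatr_eq0 implybT.
  rewrite powR_inv1 ?ler0n // -/u -us exprS invfM mulrAC mulVf ?mul1r //.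
  by rewrite gt_eqF.
have um : 0 < u ^+ m by rewrite exprn_gt0.
rewrite -[(u ^+ m)^-1]mul1r ler_pdivrMr //.
have := @subXX_le _ u v m v0 vu; rewrite us vs -natr1 addrAC subrr add0r => h.
apply: le_trans h _; apply: eqle; ring.
Qed.

Lemma sum_f (R : realType) (s z : nat) : (2 <= s)%N ->
  \sum_(k < z.+1) ((k%:R : R) `^ (-1 + s%:R^-1)) <= s%:R * (z%:R : R) `^ s%:R^-1.
Proof.
move=> s2.
have s0 : (0 < s)%N by apply: leq_trans s2.
have e0 : (-1 + s%:R^-1 : R) != 0.
  rewrite addrC subr_eq0; apply/eqP => h.
  have : (s%:R : R) = 1 by rewrite -[s%:R]invrK h invr1.
  by move/eqP; rewrite pnatr_eq1 => /eqP ss; rewrite ss in s2.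
elim: z => [|z IH].
  rewrite big_ord_recr big_ord0 /= add0r mulr0n powR0 //.
rewrite big_ord_recr /=.
apply: le_trans (lerD IH (@step_f R s z s0)) _.
apply: eqle; ring.
Qed.

Lemma ln_step (R : realType) n :
  ((n.+2%:R : R))^-1 <= ln (n.+2%:R : R) - ln (n.+1%:R).
Proof.
have n2 : (0 : R) < n.+2%:R by rewrite ltr0n.
have n1 : (0 : R) < n.+1%:R by rewrite ltr0n.
have h : (-1 : R) < - (n.+2%:R)^-1.
  by rewrite ltrN2 invf_lt1 // ltr1n.
have := le_ln1Dx h.
have -> : 1 - (n.+2%:R : R)^-1 = n.+1%:R / n.+2%:R.
  rewrite -[n.+2%:R]natr1; field; rewrite gt_eqF //; have := ler0n R n; lra.
rewrite (@ln_div R (n.+1%:R) (n.+2%:R)) ?posrE // => H; rewrite -[X in X <= _]opprK lerNl opprB; exact: H.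
Qed.

Lemma harm (R : realType) n :
  \sum_(k < n.+2) ((k%:R : R)^-1) <= 1 + ln (n.+1%:R : R).
Proof.
elim: n => [|n IH].
  by rewrite !big_ord_recr big_ord0 /= add0r mulr0n invr0 add0r ln1 addr0 invr1.
rewrite big_ord_recr /=.
apply: le_trans (lerD IH (ln_step R n)) _.
apply: eqle; ring.
Qed.

Lemma ln_ge1 (R : realType) (z : nat) : (4 <= z)%N -> 1 <= ln (z%:R : R).
Proof.
move=> z4.
have h2 : (2^-1 : R) <= ln 2.
  have h : (-1 : R) < - 2^-1 by lra.
  have := le_ln1Dx h.
  have -> : (1 - 2^-1 : R) = 2^-1 by lra.
  rewrite lnV ?posrE //; lra.
have h4 : ln (4 : R) = ln 2 *+ 2.
  by rewrite -lnXn // expr2; congr ln; lra.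
have : ln (4 : R) <= ln (z%:R).
  by rewrite ler_ln ?posrE ?ltr0n ?(leq_trans _ z4) // (ler_nat R 4 z).
rewrite h4 mulr2n; lra.
Qed.
Lemma sum_h (R : realType) (s t z : nat) : (1 <= t)%N -> (t.+1 <= s)%N -> (1 <= z)%N ->
  \sum_(k < z.+1) ((k%:R : R) `^ (- (2 * t%:R / s%:R))) <=
  (z%:R : R) `^ (1 - (t%:R + 1) / s%:R) * (1 + ln z%:R).
Proof.
move=> t1 ts; case: z => // n _.
have s0 : (0 : R) < s%:R by rewrite ltr0n (leq_trans _ ts).
have t1' : (1 : R) <= t%:R by rewrite ler1n.
have ts' : (t%:R + 1 : R) <= s%:R by rewrite natr1 ler_nat.
have c1 : (t%:R + 1) / s%:R <= (1 : R) by rewrite ler_pdivrMr // mul1r.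
have c2 : - (2 * t%:R / s%:R) <= - ((t%:R + 1) / s%:R :R).
  by rewrite lerN2 ler_pM2r ?invr_gt0 //; lra.
have e0 : (- (2 * t%:R / s%:R) : R) != 0.
  by rewrite oppr_eq0 mulf_neq0 // ?invr_eq0 gt_eqF //; lra.
apply: le_trans (_ : \sum_(k < n.+2) ((n.+1%:R : R) `^ (1 - (t%:R + 1) / s%:R) * (k%:R)^-1) <= _); last first.
  by rewrite -mulr_sumr ler_wpM2l ?powR_ge0 // harm.
apply: ler_sum => [[k kn]] _ /=.
case: k kn => [|k] kn.
  by rewrite mulr0n powR0 // invr0 mulr0.
have k1 : (1 : R) <= k.+1%:R by rewrite ler1n.
apply: le_trans (ler_powR k1 c2) _.
have -> : (k.+1%:R : R) `^ (- ((t%:R + 1) / s%:R)) = (k.+1%:R)^-1 * k.+1%:R `^ (1 - (t%:R + 1) / s%:R).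
  rewrite -(@powR_inv1 _ k.+1%:R) ?ler0n // -powRD; last by rewrite pnatr_eq0 implybT.
  by congr (_ `^ _); ring.
rewrite mulrC ler_wpM2r ?invr_ge0 ?ler0n //.
have kn' : (k.+1%:R : R) <= n.+1%:R by rewrite ler_nat.
by apply: (ge0_ler_powR _ _ _ kn'); rewrite ?nnegrE ?subr_ge0 ?ler0n.
Qed.
Set Implicit Arguments. Unset Strict Implicit.
Lemma sum_pred_le (T : finType) (R : realType) (P : pred T) (G : T -> R) :
  (forall x, 0 <= G x) -> \sum_(x | P x) G x <= \sum_x G x.
Proof. by move=> G0; rewrite [X in _ <= X](bigID P) /= lerDl sumr_ge0. Qed.

Lemma sum_inj_le (T U : finType) (R : realType) (P : pred T) (phi : T -> U)
  (G : U -> R) : {in P &, injective phi} -> (forall u, 0 <= G u) ->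
  \sum_(x | P x) G (phi x) <= \sum_u G u.
Proof.
move=> inj G0.
have E : \sum_(j in [set phi x | x in P]) G j = \sum_(x in P) G (phi x)
  := big_imset _ inj.
rewrite (_ : \sum_(x | P x) G (phi x) = \sum_(x in P) G (phi x)); last first.
  by apply: eq_bigl.
by rewrite -E sum_pred_le.
Qed.

Definition psi (t z : nat) (a : 'I_t -> nat) (j : 'I_t)
  (x : {ffun 'I_t -> 'I_z.+1}) : {ffun 'I_t -> 'I_z.+1} :=
  [ffun i => if i == j then inord (z - wsum a x) else x i].
Arguments psi {t z} a j x.

Lemma wsum_split (t z : nat) (a : 'I_t -> nat) (j : 'I_t) (x : {ffun 'I_t -> 'I_z.+1}) :
  wsum a x = (a j * x j + \sum_(i < t | i != j) a i * x i)%N.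
Proof. by rewrite /wsum (bigD1 j). Qed.

Lemma psi_inj (t z : nat) (a : 'I_t -> nat) (j : 'I_t)
  (P : pred {ffun 'I_t -> 'I_z.+1}) :
  (forall i, 0 < a i)%N -> (forall x, P x -> wsum a x <= z)%N ->
  {in P &, injective (psi a j)}.
Proof.
move=> a0 Pz x1 x2 P1 P2 e.
have oth : forall i, i != j -> x1 i = x2 i.
  by move=> i ij; have := congr1 (fun v : {ffun 'I_t -> 'I_z.+1} => v i) e; rewrite /psi !ffunE (negbTE ij).
have hj : (z - wsum a x1 = z - wsum a x2)%N.
  have := congr1 (fun v : {ffun 'I_t -> 'I_z.+1} => nat_of_ord (v j)) e; rewrite /psi !ffunE eqxx.
  by rewrite !inordK // ltnS leq_subr.
have hw : wsum a x1 = wsum a x2.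
  have := Pz _ P1; have := Pz _ P2; lia.
have hr : (\sum_(i < t | i != j) a i * x1 i = \sum_(i < t | i != j) a i * x2 i)%N.
  by apply: eq_bigr => i ij; rewrite oth.
move: hw; rewrite !(@wsum_split t z a j) hr => /addIn /eqP; rewrite eqn_pmul2l // => /eqP hx.
apply/ffunP => i; case: (eqVneq i j) => [->|ij]; last exact: oth.
exact: val_inj.
Qed.

Lemma gen (R : realType) t z (a : 'I_t -> nat) (P : pred {ffun 'I_t -> 'I_z.+1})
  (f h : nat -> R) (j : 'I_t) :
  (forall i, 0 < a i)%N -> (forall x, P x -> wsum a x <= z)%N ->
  (forall k, 0 <= f k) -> (forall k, 0 <= h k) ->
  \sum_(x | P x) (h (z - wsum a x)%N * \prod_(i | i != j) f (x i)) <=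
  (\sum_(k < z.+1) h k) * (\sum_(k < z.+1) f k) ^+ t.-1.
Proof.
move=> a0 Pz f0 h0.
pose F := fun (i : 'I_t) (k : 'I_z.+1) => if i == j then h k else f k.
have F0 : forall i k, 0 <= F i k by move=> i k; rewrite /F; case: ifP.
have E : forall x, h (z - wsum a x)%N * \prod_(i | i != j) f (x i)
    = \prod_i F i (psi a j x i).
  move=> x; rewrite [RHS](bigD1 j) //= /F /psi ffunE eqxx inordK ?ltnS ?leq_subr //.
  congr (_ * _); apply: eq_bigr => i /negbTE ij; by rewrite ffunE ij.
under eq_bigr do rewrite E.
have S := sum_inj_le (G := fun v : {ffun 'I_t -> 'I_z.+1} => \prod_i F i (v i))
   (psi_inj (a:=a) (j:=j) a0 Pz).
apply: le_trans (S _) _; first by move=> u; apply: prodr_ge0 => i _.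
rewrite -bigA_distr_bigA (bigD1 j) //= {1}/F eqxx.
rewrite ler_wpM2l ?sumr_ge0 //.
rewrite (eq_bigr (fun _ => \sum_(k < z.+1) f k)); last first.
  by move=> i /negbTE ij; apply: eq_bigr => k _; rewrite /F ij.
rewrite (eq_bigl (fun i => i \in predC1 j)) // prodr_const cardC1 card_ord.
by [].
Qed.
Lemma prod_powR (R : realType) (I : finType) (F : I -> R) (r : R) :
  (forall i, 0 <= F i) -> (\prod_i F i) `^ r = \prod_i (F i `^ r).
Proof.
move=> F0; rewrite /index_enum; elim: (Finite.enum I) => [|i l IH].
  by rewrite !big_nil powR1.
by rewrite !big_cons powRM ?IH // prodr_ge0.
Qed.

Lemma free_sum (R : realType) t z (P : pred {ffun 'I_t -> 'I_z.+1}) (f : nat -> R) :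
  (forall k, 0 <= f k) ->
  \sum_(x | P x) \prod_i f (x i) <= (\sum_(k < z.+1) f k) ^+ t.
Proof.
move=> f0; apply: le_trans (sum_pred_le _ _) _.
  by move=> x; apply: prodr_ge0.
rewrite -(bigA_distr_bigA (fun (i : 'I_t) (k : 'I_z.+1) => f k)) /=.
by rewrite prodr_const card_ord.
Qed.

Lemma ex_max (t : nat) (g : 'I_t -> nat) : (0 < t)%N -> exists j, forall i, (g i <= g j)%N.
Proof.
move=> t0; case: (@arg_maxnP _ (Ordinal t0) predT g) => // j _ H.
by exists j => i; exact: H.
Qed.

Lemma wsum_le (t z : nat) (a : 'I_t -> nat) (x : {ffun 'I_t -> 'I_z.+1}) (j : 'I_t) :
  (forall i, x i <= x j)%N -> (wsum a x <= (\sum_i a i) * x j)%N.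
Proof.
move=> H; rewrite /wsum big_distrl /=; apply: leq_sum => i _.
by rewrite leq_mul2l H orbT.
Qed.

Lemma ZM (R : realType) (z : nat) (p q : R) : (0 < z)%N ->
  (z%:R : R) `^ p * (z%:R : R) `^ q = (z%:R : R) `^ (p + q).
Proof. by move=> z0; rewrite powRD // pnatr_eq0 -lt0n z0 implybT. Qed.

Lemma ZX (R : realType) (z n : nat) (p : R) :
  ((z%:R : R) `^ p) ^+ n = (z%:R : R) `^ (p * n%:R).
Proof. by rewrite -powR_mulrn ?powR_ge0 // powRrM. Qed.
Lemma partI (R : realType) (s t : nat) (a : 'I_t.+1 -> nat) :
  (2 <= s)%N -> (t.+1 <= s - 1)%N -> (forall i, (0 < a i)%N) ->
  exists C : R, exists N : nat, 0 < C /\ forall z : nat, (N <= z)%N ->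
    @S1 R s t.+1 a z <= C * (z%:R : R) `^ (-1 + t.+1%:R / s%:R).
Proof.
move=> s2 ts a0.
have s0 : (0 < s)%N by apply: leq_trans s2.
set e : R := -1 + s%:R^-1.
have e0 : e <= 0.
  rewrite /e addrC subr_le0 invf_le1 ?ltr0n // ler1n //.
set A := (\sum_i a i)%N.
have A0 : (0 < A)%N by rewrite /A (bigD1 ord0) //= ltn_addr // a0.
set K := (A%:R^-1 : R) `^ e.
have K0 : 0 < K by rewrite powR_gt0 // invr_gt0 ltr0n.
exists (t.+1%:R * K * s%:R ^+ t), 1%N; split.
  by rewrite !mulr_gt0 // ?ltr0n // exprn_gt0 // ltr0n.
move=> z z1.
pose f := fun k : nat => (k%:R : R) `^ e.
have f0 : forall k, 0 <= f k by move=> k; rewrite powR_ge0.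
pose h0 := fun k : nat => ((k == 0)%N%:R : R).
have h00 : forall k, 0 <= h0 k by move=> k; rewrite ler0n.
pose P := fun x : {ffun 'I_t.+1 -> 'I_z.+1} => [forall i, (0 < x i)%N] && (wsum a x == z).
have pt : forall x, P x -> \prod_i f (x i) <=
    K * (z%:R `^ e) * \sum_j (h0 (z - wsum a x)%N * \prod_(i | i != j) f (x i)).
  move=> x /andP[/forallP xp /eqP wz].
  have [j jm] := ex_max (fun i => nat_of_ord (x i)) (ltn0Sn t).
  have zA := wsum_le a jm; rewrite wz in zA.
  rewrite [X in X <= _](bigD1 j) //= [X in _ <= _ * X](bigD1 j) //= wz subnn /h0 /= mul1r mulrDr.
  rewrite -[X in X <= _]addr0; apply: lerD; last first.
    apply: mulr_ge0; first by rewrite mulr_ge0 ?powR_ge0 // ltW.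
    by apply: sumr_ge0 => i _; rewrite mulr_ge0 ?prodr_ge0 ?ler0n.
  rewrite ler_wpM2r ?prodr_ge0 //.
  have -> : K * z%:R `^ e = (z%:R / A%:R) `^ e.
    by rewrite powRM ?invr_ge0 ?ler0n // mulrC.
  apply: powR_decr => //.
  - by rewrite divr_gt0 ?ltr0n.
  - by rewrite ler_pdivrMr ?ltr0n // mulrC -natrM ler_nat.
rewrite /S1.
rewrite (eq_bigr (fun x : {ffun 'I_t.+1 -> 'I_z.+1} => \prod_i f (x i))); last first.
  by move=> x _; rewrite prod_powR // => i; rewrite ler0n.
apply: (le_trans (ler_sum _ pt)).
rewrite -mulr_sumr exchange_big /=.
have hs : \sum_(k < z.+1) h0 k = 1.
  by rewrite big_ord_recl /h0 /= big1 ?addr0.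
have G : forall j : 'I_t.+1, \sum_(x | P x) (h0 (z - wsum a x)%N * \prod_(i | i != j) f (x i))
   <= (s%:R * (z%:R : R) `^ s%:R^-1) ^+ t.
  move=> j; apply: le_trans (gen j a0 _ f0 h00) _.
    by move=> x /andP[_ /eqP ->].
  rewrite hs mul1r lerXn2r ?nnegrE ?sumr_ge0 ?mulr_ge0 ?powR_ge0 ?ler0n //.
  exact: sum_f.
apply: le_trans (_ : _ <= K * z%:R `^ e * (t.+1%:R * (s%:R * (z%:R : R) `^ s%:R^-1) ^+ t)) _.
  rewrite ler_wpM2l ?mulr_ge0 ?powR_ge0 ?(ltW K0) //.
  apply: le_trans (ler_sum _ (fun j _ => G j)) _.
  by rewrite big_const_ord iter_addr_0 [X in _ <= X]mulr_natl.
rewrite exprMn ZX.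
have -> : (z%:R : R) `^ (-1 + t.+1%:R / s%:R) = z%:R `^ e * z%:R `^ (s%:R^-1 * t%:R).
  by rewrite ZM //; congr (_ `^ _); rewrite /e -natr1; ring.
apply: eqle; ring.
Qed.
Lemma partII (R : realType) (s t : nat) (a : 'I_t.+1 -> nat) :
  (2 <= s)%N -> (t.+1 <= s - 1)%N -> (forall i, (0 < a i)%N) ->
  exists C : R, exists N : nat, 0 < C /\ forall z : nat, (N <= z)%N ->
    @S2 R s t.+1 a z <= C * ((z%:R : R) `^ (- s%:R^-1) * ln (z%:R : R)).
Proof.
move=> s2 ts a0.
have s0 : (0 < s)%N by apply: leq_trans s2.
set e : R := -1 + s%:R^-1.
have e0 : e <= 0.
  rewrite /e addrC subr_le0 invf_le1 ?ltr0n // ler1n //.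
set d : R := 2 * t.+1%:R / s%:R.
have d0 : 0 <= d by rewrite /d mulr_ge0 ?invr_ge0 ?ler0n.
set A := (\sum_i a i)%N.
have A0 : (0 < A)%N by rewrite /A (bigD1 ord0) //= ltn_addr // a0.
set K1 := ((2 * A)%N%:R^-1 : R) `^ e.
have K10 : 0 < K1 by rewrite powR_gt0 // invr_gt0 ltr0n muln_gt0.
set K2 := (2^-1 : R) `^ (- d).
have K20 : 0 < K2 by rewrite powR_gt0.
exists (K2 * s%:R ^+ t.+1 + 2 * t.+1%:R * K1 * s%:R ^+ t), 4%N; split.
  by rewrite addr_gt0 ?mulr_gt0 // ?ltr0n // exprn_gt0 // ltr0n.
move=> z z4.
have z1 : (0 < z)%N by apply: leq_trans z4.
have zR : (0 : R) < z%:R by rewrite ltr0n.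
have L1 := ln_ge1 R z z4.
pose f := fun k : nat => (k%:R : R) `^ e.
have f0 : forall k, 0 <= f k by move=> k; rewrite powR_ge0.
pose h := fun k : nat => (k%:R : R) `^ (- d).
have h0 : forall k, 0 <= h k by move=> k; rewrite powR_ge0.
pose P := fun x : {ffun 'I_t.+1 -> 'I_z.+1} => [forall i, (0 < x i)%N] && (wsum a x < z)%N.
have pt : forall x, P x -> \prod_i f (x i) * h (z - wsum a x)%N <=
    K2 * z%:R `^ (- d) * \prod_i f (x i) +
    K1 * (z%:R `^ e) * \sum_j (h (z - wsum a x)%N * \prod_(i | i != j) f (x i)).
  move=> x /andP[/forallP xp wz].
  have [j jm] := ex_max (fun i => nat_of_ord (x i)) (ltn0Sn t).
  have zA := wsum_le a jm.
  have Y0 : 0 <= K1 * (z%:R `^ e) * \sum_j (h (z - wsum a x)%N * \prod_(i | i != j) f (x i)).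
    apply: mulr_ge0; first by rewrite mulr_ge0 ?powR_ge0 // ltW.
    by apply: sumr_ge0 => i _; rewrite mulr_ge0 ?prodr_ge0.
  have X0 : 0 <= K2 * z%:R `^ (- d) * \prod_i f (x i).
    by rewrite !mulr_ge0 ?powR_ge0 ?prodr_ge0 // ltW.
  case: (leqP z (2 * (z - wsum a x))) => hz.
    rewrite -[X in X <= _]addr0; apply: lerD => //.
    rewrite mulrC ler_wpM2r ?prodr_ge0 //.
    have -> : K2 * z%:R `^ (- d) = (z%:R / 2) `^ (- d).
      by rewrite powRM ?invr_ge0 ?ler0n // mulrC.
    apply: powR_decr; rewrite ?oppr_le0 //.
    - by rewrite divr_gt0.
    - rewrite ler_pdivrMr // -[2]/(2%:R) -natrM ler_nat; lia.
  rewrite -[X in X <= _]add0r; apply: lerD => //.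
  rewrite (bigD1 j) //= [X in _ <= _ * X](bigD1 j) //= mulrDr.
  rewrite -[X in X <= _]addr0; apply: lerD; last first.
    apply: mulr_ge0; first by rewrite mulr_ge0 ?powR_ge0 // ltW.
    by apply: sumr_ge0 => i _; rewrite mulr_ge0 ?prodr_ge0.
  rewrite -mulrA [X in _ * X <= _]mulrC.
  rewrite ler_wpM2r ?mulr_ge0 ?prodr_ge0 //.
  have -> : K1 * z%:R `^ e = (z%:R / (2 * A)%N%:R) `^ e.
    by rewrite powRM ?invr_ge0 ?ler0n // mulrC.
  apply: powR_decr => //.
  - by rewrite divr_gt0 ?ltr0n ?muln_gt0.
  - rewrite ler_pdivrMr ?ltr0n ?muln_gt0 // mulrC -natrM ler_nat; lia.
rewrite /S2.
rewrite (eq_bigr (fun x : {ffun 'I_t.+1 -> 'I_z.+1} => \prod_i f (x i) * h (z - wsum a x)%N)); last first.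
  move=> x /andP[_ wz]; rewrite prod_powR; last by move=> i; rewrite ler0n.
  by rewrite /h natrB // ltnW.
apply: (le_trans (ler_sum _ pt)).
rewrite big_split /= -!mulr_sumr exchange_big /=.
set L := ln (z%:R : R).
set F := \sum_(k < z.+1) f k.
have F0 : 0 <= F by rewrite sumr_ge0.
have FB : F <= s%:R * (z%:R : R) `^ s%:R^-1 by exact: sum_f.
have ts2 : (t.+2 <= s)%N by lia.
have HB := @sum_h R s t.+1 z (ltn0Sn t) ts2 z1.
have G : forall j : 'I_t.+1, \sum_(x | P x) (h (z - wsum a x)%N * \prod_(i | i != j) f (x i))
   <= (z%:R `^ (1 - (t.+1%:R + 1) / s%:R) * (1 + L)) * (s%:R * (z%:R : R) `^ s%:R^-1) ^+ t.
  move=> j; apply: le_trans (gen j a0 _ f0 h0) _.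
    by move=> x /andP[_ /ltnW].
  apply: ler_pM => //; first by rewrite sumr_ge0.
  - by rewrite exprn_ge0.
  - by rewrite lerXn2r ?nnegrE ?mulr_ge0 ?powR_ge0 ?ler0n.
have T1 : K2 * z%:R `^ (- d) * \sum_(x | P x) \prod_i f (x i) <=
    K2 * s%:R ^+ t.+1 * (z%:R `^ (- s%:R^-1) * L).
  apply: le_trans (_ : _ <= K2 * z%:R `^ (- d) * (s%:R * (z%:R : R) `^ s%:R^-1) ^+ t.+1) _.
    rewrite ler_wpM2l ?mulr_ge0 ?powR_ge0 ?(ltW K20) //.
    apply: le_trans (free_sum _ f0) _.
    by rewrite lerXn2r ?nnegrE ?mulr_ge0 ?powR_ge0 ?ler0n.
  rewrite exprMn ZX.
  have -> : K2 * z%:R `^ (- d) * (s%:R ^+ t.+1 * z%:R `^ (s%:R^-1 * t.+1%:R))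
      = K2 * s%:R ^+ t.+1 * (z%:R `^ (- d) * z%:R `^ (s%:R^-1 * t.+1%:R)) by ring.
  rewrite ler_wpM2l ?mulr_ge0 ?exprn_ge0 ?ler0n ?(ltW K20) // ZM //.
  apply: le_trans (_ : _ <= z%:R `^ (- s%:R^-1)) _.
    apply: ler_powR; first by rewrite ler1n.
    have -> : - d + s%:R^-1 * t.+1%:R = - (t.+1%:R * s%:R^-1) by rewrite /d; ring.
    by rewrite lerN2 -[X in X <= _]mul1r ler_wpM2r ?invr_ge0 ?ler0n ?ler1n.
  by rewrite ler_peMr ?powR_ge0.
have T2 : K1 * z%:R `^ e * \sum_(j < t.+1) \sum_(x | P x)
      (h (z - wsum a x)%N * \prod_(i | i != j) f (x i)) <=
    2 * t.+1%:R * K1 * s%:R ^+ t * (z%:R `^ (- s%:R^-1) * L).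
  apply: le_trans (_ : _ <= K1 * z%:R `^ e * (t.+1%:R *
      ((z%:R `^ (1 - (t.+1%:R + 1) / s%:R) * (1 + L)) * (s%:R * (z%:R : R) `^ s%:R^-1) ^+ t))) _.
    rewrite ler_wpM2l ?mulr_ge0 ?powR_ge0 ?(ltW K10) //.
    apply: le_trans (ler_sum _ (fun j _ => G j)) _.
    by rewrite big_const_ord iter_addr_0 [X in _ <= X]mulr_natl.
  rewrite exprMn ZX.
  have EZ : (z%:R : R) `^ e * (z%:R `^ (1 - (t.+1%:R + 1) / s%:R) * z%:R `^ (s%:R^-1 * t%:R))
      = z%:R `^ (- s%:R^-1).
    rewrite !ZM //; congr (_ `^ _); rewrite /e -[t.+1%:R]natr1; ring.
  apply: le_trans (_ : _ <= (K1 * t.+1%:R * s%:R ^+ t) * (z%:R `^ (- s%:R^-1) * (1 + L))) _.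
    by apply: eqle; rewrite -EZ; ring.
  have -> : 2 * t.+1%:R * K1 * s%:R ^+ t * (z%:R `^ (- s%:R^-1) * L)
      = (K1 * t.+1%:R * s%:R ^+ t) * (z%:R `^ (- s%:R^-1) * (2 * L)) by ring.
  rewrite ler_wpM2l ?mulr_ge0 ?exprn_ge0 ?ler0n ?(ltW K10) //.
  have L1' : 1 <= L by exact: L1.
  rewrite ler_wpM2l ?powR_ge0 //; lra.
apply: le_trans (lerD T1 T2) _.
by apply: eqle; ring.
Qed.
Unset Implicit Arguments.

Theorem lemma1 (R : realType) (s t : nat) (a : 'I_t -> nat) :
  (2 <= s)%N -> (1 <= t)%N -> (t <= s - 1)%N -> (forall i, (0 < a i)%N) ->
  (exists C : R, exists N : nat, 0 < C /\
     forall z : nat, (N <= z)%N ->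
       @S1 R s t a z <= C * (z%:R : R) `^ (-1 + t%:R / s%:R)) /\
  (exists C : R, exists N : nat, 0 < C /\
     forall z : nat, (N <= z)%N ->
       @S2 R s t a z <= C * ((z%:R : R) `^ (- s%:R^-1) * ln (z%:R : R))).
Proof.
move=> s2 t1 ts a0.
case: t a t1 ts a0 => [//|t] a _ ts a0.
by split; [exact: partI | exact: partII].
Qed.
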